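(* Let $A\in\mathbb{R}^{m\times n}$ with $\operatorname{rank}(A)=m$, $b\in\mathbb{R}^m$, and suppose $\mathcal{F}=\{x\in\mathbb{R}^n: Ax=b,\ x\ge 0\}$ is nonempty with no strictly positive point. Let $y\in\mathbb{R}^m$ satisfy $0\ne z:=A^Ty\ge 0$ and $\langle b,y\rangle=0$, and let $V\in\mathbb{R}^{n\times(n-s_z)}$ be the matrix whose columns are the unit vectors $e_i$ for the indices $i$ with $z_i=0$ (in increasing order), where $s_z=|\{i:z_i>0\}|$. Let $\mathcal{I}_0=\{i\in\{1,\dots,n\}: x_i=0 \text{ for all } x\in\mathcal{F}\}$. Then for every basic feasible solution $\bar x$ of $\mathcal{F}$ with basis $\mathcal{B}$: (1) the degree of degeneracy of $\bar x$ is at least $m-\operatorname{rank}(AV)$; (2) at least $m-\operatorname{rank}(AV)$ of the basic indices in $\mathcal{B}$ belong to $\mathcal{I}_0$.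
   Context: Given $\mathcal{B}\subset\{1,\dots,n\}$ with $|\mathcal{B}|=m$, a point $x\in\mathcal{F}$ is a basic feasible solution (with basis $\mathcal{B}$) if $A(:,\mathcal{B})$ (columns of $A$ indexed by $\mathcal{B}$) is nonsingular and $x_i=0$ for all $i\notin\mathcal{B}$. The degree of degeneracy of a basic feasible solution $\bar x$ with basis $\mathcal{B}$ is the number of indices $i\in\mathcal{B}$ with $\bar x_i=0$. Such a $y$ exists whenever strict feasibility fails, and $\mathcal{F}=\{Vv: AVv=b,\ v\ge 0\}$. *)

(* Defs.v *)
From HB Require Import structures.
From mathcomp Require Import all_boot all_order all_algebra.
Set Implicit Arguments. Unset Strict Implicit. Unset Printing Implicit Defensive.
Import Order.TTheory GRing.Theory Num.Theory.
Local Open Scope ring_scope.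

(* Vectors in R^k are column vectors 'cV[R]_k; indices are 'I_n = {0,...,n-1}. *)

Definition feasible (R : realFieldType) m n (A : 'M[R]_(m, n)) (b : 'cV[R]_m)
  (x : 'cV[R]_n) : Prop :=
  A *m x = b /\ forall i, 0 <= x i 0.

(* A(:, B): the columns of A indexed by B (in increasing order). *)
Definition colsB (R : realFieldType) m n (A : 'M[R]_(m, n)) (B : {set 'I_n}) :
  'M[R]_(m, #|B|) := colsub (fun j : 'I_#|B| => enum_val j) A.

Definition basic_feasible (R : realFieldType) m n (A : 'M[R]_(m, n))
  (b : 'cV[R]_m) (x : 'cV[R]_n) (B : {set 'I_n}) : Prop :=
  [/\ feasible A b x, #|B| = m, \rank (colsB A B) = m
    & forall i, i \notin B -> x i 0 = 0].

Definition degeneracy n (R : realFieldType) (x : 'cV[R]_n) (B : {set 'I_n}) : nat :=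
  #|[set i in B | x i 0 == 0]|.

Definition zeroset (R : realFieldType) n (z : 'cV[R]_n) : {set 'I_n} :=
  [set i | z i 0 == 0].

Definition Vmat (R : realFieldType) n (z : 'cV[R]_n) :
  'M[R]_(n, #|zeroset z|) :=
  \matrix_(i < n, j < #|zeroset z|) (i == enum_val j)%:R.

Definition in_I0 (R : realFieldType) m n (A : 'M[R]_(m, n)) (b : 'cV[R]_m)
  (i : 'I_n) : Prop :=
  forall x, feasible A b x -> x i 0 = 0.

(* Main.v *)
Require Import Defs.
From HB Require Import structures.
From mathcomp Require Import all_boot all_order all_algebra.
Import Order.TTheory GRing.Theory Num.Theory.
Local Open Scope ring_scope.

Lemma I0_of_pos (R : realFieldType) (m n : nat)
  (A : 'M[R]_(m, n)) (b : 'cV[R]_m) (y : 'cV[R]_m)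
  (hzge : forall i, 0 <= (A^T *m y) i 0)
  (hby : \sum_(i < m) b i 0 * y i 0 = 0) (i : 'I_n) :
  (A^T *m y) i 0 != 0 -> in_I0 A b i.
Proof.
move=> hzi x [hAx hx].
have e : (A^T *m y)^T *m x = y^T *m b.
  by rewrite trmx_mul trmxK -mulmxA hAx.
have hsum : \sum_(j < n) (A^T *m y) j 0 * x j 0 = 0.
  transitivity (((A^T *m y)^T *m x) 0 0).
    rewrite mxE; apply: (@eq_bigr _ _ _ 'I_n) => j _; by rewrite !mxE.
  rewrite e -hby mxE; apply: eq_bigr => k _; by rewrite mxE mulrC.
have := @psumr_eq0P _ _ xpredT (fun j => (A^T *m y) j 0 * x j 0)
  (fun j _ => mulr_ge0 (hzge j) (hx j)) hsum i isT.
by move/eqP; rewrite mulf_eq0 (negPf hzi) /= => /eqP.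
Qed.

Theorem mainTheorem7 (R : realFieldType) (m n : nat)
  (A : 'M[R]_(m, n)) (b : 'cV[R]_m) (y : 'cV[R]_m)
  (hrank : \rank A = m)
  (hne : exists x, feasible A b x)
  (hnostrict : ~ exists x, feasible A b x /\ forall i, 0 < x i 0)
  (hz0 : A^T *m y != 0)
  (hzge : forall i, 0 <= (A^T *m y) i 0)
  (hby : \sum_(i < m) b i 0 * y i 0 = 0) :
  forall (xbar : 'cV[R]_n) (B : {set 'I_n}), basic_feasible A b xbar B ->
    ((m - \rank (A *m Vmat (A^T *m y)))%N <= degeneracy xbar B)%N /\
    exists S : {set 'I_n}, [/\ S \subset B,
      ((m - \rank (A *m Vmat (A^T *m y)))%N <= #|S|)%N
      & forall i, i \in S -> in_I0 A b i].
Proof.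
move=> xbar B [hfeas hcard hrkB hoff].
set z := A^T *m y.
set T := [set i in B | z i 0 != 0].
have hI0 : forall i, i \in T -> in_I0 A b i.
  by move=> i; rewrite inE => /andP[_ hi]; exact: I0_of_pos.
set C : 'M[R]_(m, #|T|) := colsub (fun j : 'I_#|T| => enum_val j) A.
set AV := A *m Vmat z.
have hsub : ((colsB A B)^T <= AV^T + C^T)%MS.
  apply/row_subP => i.
  have hiB : enum_val i \in B := enum_valP i.
  case hz: (z (enum_val i) 0 == 0).
  - have hZ : enum_val i \in zeroset z by rewrite inE hz.
    apply: submx_trans (addsmxSl _ _).
    have -> : row i (colsB A B)^T = row (enum_rank_in hZ (enum_val i)) AV^T.
      apply/rowP => k; rewrite !mxE.
      rewrite (bigD1 (enum_val i)) //= big1 ?addr0.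
        by rewrite mxE enum_rankK_in // eqxx mulr1.
      by move=> l /negPf hl; rewrite mxE enum_rankK_in // hl mulr0.
    exact: row_sub.
  - have hT : enum_val i \in T by rewrite inE hiB hz.
    apply: submx_trans (addsmxSr _ _).
    have -> : row i (colsB A B)^T = row (enum_rank_in hT (enum_val i)) C^T.
      by apply/rowP => k; rewrite !mxE enum_rankK_in.
    exact: row_sub.
have hle : (m <= \rank AV + #|T|)%N.
  rewrite -{1}hrkB -mxrank_tr.
  apply: leq_trans (mxrankS hsub) _.
  apply: leq_trans (mxrank_adds_leqif _ _) _.
  by rewrite mxrank_tr leq_add2l rank_leq_row.
have hT : ((m - \rank AV)%N <= #|T|)%N by rewrite leq_subLR.
split; last first.
  exists T; split => //; apply/subsetP => i; by rewrite inE => /andP[].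
apply: (leq_trans hT); apply: subset_leq_card; apply/subsetP => i hi.
have := hi; rewrite inE => /andP[hiB _].
by rewrite inE hiB /= (hI0 i hi xbar hfeas).
Qed.
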